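(* Let $S_0,S_1,S_2,S_3$ be $3$-stars, let $G_0=S_0$ and for $i\in\{1,2,3\}$ let $G_i=G_{i-1}\rhd_{v_{i-1}}S_i$, where $v_{i-1}$ is a vertex of $G_{i-1}$. If $Z=G_3$ has maximum degree at most $3$ and diameter $8$, then $Z$ is unique up to isomorphism.
   Context: A 3-star is $K_{1,3}$. For a graph $G'$, a vertex $v$ of $G'$ and a star $S$, $G'\rhd_v S$ is the graph obtained from the disjoint union of $G'$ and $S$ by identifying $v$ with a leaf of $S$. *)

(* Defs.v *)
From mathcomp Require Import all_boot all_fingroup.
Set Implicit Arguments. Unset Strict Implicit. Unset Printing Implicit Defensive.

Fixpoint walk (T : finType) (e : rel T) (k : nat) (x y : T) : bool :=
  if k is k'.+1 then [exists z, e x z && walk e k' z y] else x == y.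

Definition dist_is (T : finType) (e : rel T) (x y : T) (d : nat) : Prop :=
  walk e d x y /\ forall j, j < d -> ~~ walk e j x y.

Definition diameter_is (T : finType) (e : rel T) (d : nat) : Prop :=
  (forall x y, exists2 k, k <= d & walk e k x y) /\
  (exists x y, dist_is e x y d).

Definition degree (T : finType) (e : rel T) (x : T) : nat := #|[set y | e x y]|.

Definition max_degree_le (T : finType) (e : rel T) (D : nat) : Prop :=
  forall x, degree e x <= D.

Definition isomorphic (T : finType) (e1 e2 : rel T) : Prop :=
  exists f : {perm T}, forall x y, e1 x y = e2 (f x) (f y).

Definition edgeb (a b : nat) : rel nat :=
  fun x y => ((x == a) && (y == b)) || ((x == b) && (y == a)).

Definition star0 : rel nat := fun x y => [|| edgeb 0 1 x y, edgeb 0 2 x y | edgeb 0 3 x y].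

(* G' |>_v S  where G' has vertex set {0,..,n-1}: the new 3-star S has
   centre n and leaves v (identified with a leaf of S), n+1, n+2. *)
Definition glue_star (e : rel nat) (n v : nat) : rel nat :=
  fun x y => [|| e x y, edgeb v n x y, edgeb n n.+1 x y | edgeb n n.+2 x y].

(* G_3 for the choices v_0 (vertex of G_0, < 4), v_1 (vertex of G_1, < 7),
   v_2 (vertex of G_2, < 10); G_3 has vertex set {0,..,12}. *)
Definition G3rel (v0 v1 v2 : nat) : rel nat :=
  glue_star (glue_star (glue_star star0 4 v0) 7 v1) 10 v2.

Definition G3 (v0 v1 v2 : nat) : rel 'I_13 :=
  fun x y => G3rel v0 v1 v2 x y.

(* Main.v *)
Require Import Defs.
From mathcomp Require Import all_boot all_fingroup.

Set Implicit Arguments. Unset Strict Implicit. Unset Printing Implicit Defensive.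

Section Gen.
Variable E : rel nat.
Let e : rel 'I_13 := fun x y => E x y.

Definition step (W : seq nat) :=
  [seq x <- iota 0 13 | has (E x) W].

Fixpoint ws (k : nat) (y : nat) : seq nat :=
  if k is k'.+1 then step (ws k' y) else [:: y].

Fixpoint wsa (W : seq nat) (n : nat) : seq (seq nat) :=
  if n is n'.+1 then W :: wsa (step W) n' else [::].

Lemma wsS k y : ws k.+1 y = [seq x <- iota 0 13 | has (E x) (ws k y)].
Proof. by []. Qed.

Lemma ws_lt k (y : 'I_13) z : z \in ws k y -> z < 13.
Proof.
case: k => [|k]; first by rewrite inE => /eqP ->.
by rewrite wsS mem_filter mem_iota => /andP [_ /andP [_ H]].
Qed.

Lemma walkS k (x y : 'I_13) : walk e k.+1 x y = [exists z, e x z && walk e k z y].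
Proof. by []. Qed.

Lemma walk_ws k (x y : 'I_13) : walk e k x y = (val x \in ws k y).
Proof.
elim: k x => [|k IH] x; first by rewrite /= inE.
rewrite walkS wsS mem_filter mem_iota leq0n add0n ltn_ord andTb andbT.
apply/existsP/hasP.
  case=> z /andP [H1 H2]; exists (val z) => //; by rewrite -IH.
move=> [z] Hz H1; have Hz' := ws_lt Hz.
exists (Ordinal Hz'); apply/andP; split => //; by rewrite IH.
Qed.

Definition wsl (y : nat) (n : nat) := [seq ws k y | k <- iota 0 n].

Definition degb := all (fun x => count (E x) (iota 0 13) <= 3) (iota 0 13).

Definition diamb :=
  all (fun y => let L := wsl y 9 in all (fun x => has (fun W => x \in W) L) (iota 0 13)) (iota 0 13) &&
  has (fun y => let L := wsl y 9 in
     has (fun x => (x \in nth [::] L 8) && all (fun W => x \notin W) (take 8 L)) (iota 0 13)) (iota 0 13).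

Lemma degbP : max_degree_le e 3 -> degb.
Proof.
move=> H; apply/allP => x; rewrite mem_iota leq0n add0n andTb => Hx.
have := H (Ordinal Hx); rewrite /degree cardE /enum_mem -enumT size_filter.
rewrite -val_enum_ord count_map.
congr (_ <= _); apply: eq_count => y; by rewrite /= inE.
Qed.

Lemma diambP : diameter_is e 8 -> diamb.
Proof.
case=> H1 [x [y [Hw Hn]]]; apply/andP; split.
  apply/allP => y'; rewrite mem_iota leq0n add0n andTb => Hy; apply/allP => x'; rewrite mem_iota leq0n add0n andTb => Hx.
  have [k Hk Hw'] := H1 (Ordinal Hx) (Ordinal Hy).
  rewrite /wsl; apply/hasP; exists (ws k y'); last by rewrite walk_ws in Hw'.
  by apply/mapP; exists k => //; rewrite mem_iota.
apply/hasP; exists (val y); first by rewrite mem_iota ltn_ord.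
apply/hasP; exists (val x); first by rewrite mem_iota ltn_ord.
rewrite /wsl (nth_map 0) // nth_iota // add0n -walk_ws Hw andTb.
rewrite -map_take all_map (_ : take 8 (iota 0 9) = iota 0 8) //; apply/allP => j.
rewrite mem_iota add0n => /andP [_ Hj] /=; by rewrite -walk_ws Hn.
Qed.
Lemma wsaE y m n : wsa (ws m y) n = [seq ws k y | k <- iota m n].
Proof. by elim: n m => [|n IH] m //=; rewrite -IH. Qed.

Definition Ls := [seq wsa [:: y] 9 | y <- iota 0 13].

Definition diam1 (L0 : seq (seq (seq nat))) :=
  all (fun L => all (fun x => has (fun W => x \in W) L) (iota 0 13)) L0.
Definition diam2 (L0 : seq (seq (seq nat))) :=
  has (fun L =>
     has (fun x => (x \in nth [::] L 8) && all (fun W => x \notin W) (take 8 L)) (iota 0 13)) L0.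

Definition diamc := let L0 := Ls in diam1 L0 && diam2 L0.

Lemma LsE : Ls = [seq wsl y 9 | y <- iota 0 13].
Proof. apply: eq_map => y; exact: (wsaE y 0). Qed.

Lemma diamcE : diamc = diamb.
Proof.
rewrite /diamc LsE /diam1 /diam2 all_map has_map.
reflexivity.
Qed.
End Gen.

Definition isob (E1 E2 : rel nat) (s : seq nat) :=
  perm_eq s (iota 0 13) &&
  all (fun x => all (fun y => E1 x y == E2 (nth 0 s x) (nth 0 s y)) (iota 0 13)) (iota 0 13).

Lemma isobP (E1 E2 : rel nat) s : isob E1 E2 s ->
  isomorphic (fun x y : 'I_13 => E1 x y) (fun x y : 'I_13 => E2 x y).
Proof.
case/andP => Hp /allP H.
have Hs : size s = 13 by rewrite (perm_size Hp) size_iota.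
have Hu : uniq s by rewrite (perm_uniq Hp) iota_uniq.
have Hlt (i : 'I_13) : nth 0 s i < 13.
  have : nth 0 s i \in s by apply: mem_nth; rewrite Hs.
  by rewrite (perm_mem Hp) mem_iota.
pose f (i : 'I_13) : 'I_13 := inord (nth 0 s i).
have fv i : (f i : nat) = nth 0 s i by rewrite /f inordK.
have Hi : injective f.
  move=> i j /(congr1 (@nat_of_ord 13)); rewrite !fv => /eqP; rewrite nth_uniq ?Hs //.
  by move/eqP/val_inj.
exists (perm Hi) => x y; rewrite !permE /= !fv.
have := H x; rewrite mem_iota ltn_ord => /(_ isT) /allP /(_ y).
by rewrite mem_iota ltn_ord => /(_ isT) /eqP.
Qed.

Lemma iso_sym (e1 e2 : rel 'I_13) : isomorphic e1 e2 -> isomorphic e2 e1.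
Proof. case=> f Hf; exists f^-1%g => x y; by rewrite Hf !permKV. Qed.

Lemma iso_trans (e1 e2 e3 : rel 'I_13) : isomorphic e1 e2 -> isomorphic e2 e3 -> isomorphic e1 e3.
Proof. case=> f Hf [g Hg]; exists (f * g)%g => x y; by rewrite Hf Hg !permM. Qed.

Definition keys : seq (nat * nat * nat) := [:: (1,2,5); (1,2,6); (1,2,8); (1,2,9); (1,3,5); (1,3,6); (1,3,8); (1,3,9); (1,5,2); (1,5,3); (1,5,8); (1,5,9); (1,6,2); (1,6,3); (1,6,8); (1,6,9); (2,1,5); (2,1,6); (2,1,8); (2,1,9); (2,3,5); (2,3,6); (2,3,8); (2,3,9); (2,5,1); (2,5,3); (2,5,8); (2,5,9); (2,6,1); (2,6,3); (2,6,8); (2,6,9); (3,1,5); (3,1,6); (3,1,8); (3,1,9); (3,2,5); (3,2,6); (3,2,8); (3,2,9); (3,5,1); (3,5,2); (3,5,8); (3,5,9); (3,6,1); (3,6,2); (3,6,8); (3,6,9)].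
Definition tbls : seq (seq nat) := [:: [:: 0; 1; 2; 3; 4; 5; 6; 7; 8; 9; 10; 11; 12]; [:: 0; 1; 2; 3; 4; 6; 5; 7; 8; 9; 10; 11; 12]; [:: 0; 2; 1; 3; 7; 8; 9; 4; 5; 6; 10; 11; 12]; [:: 0; 2; 1; 3; 7; 8; 9; 4; 6; 5; 10; 11; 12]; [:: 0; 1; 3; 2; 4; 5; 6; 7; 8; 9; 10; 11; 12]; [:: 0; 1; 3; 2; 4; 6; 5; 7; 8; 9; 10; 11; 12]; [:: 0; 2; 3; 1; 7; 8; 9; 4; 5; 6; 10; 11; 12]; [:: 0; 2; 3; 1; 7; 8; 9; 4; 6; 5; 10; 11; 12]; [:: 0; 1; 2; 3; 4; 5; 6; 10; 11; 12; 7; 8; 9]; [:: 0; 1; 3; 2; 4; 5; 6; 10; 11; 12; 7; 8; 9]; [:: 7; 2; 8; 9; 0; 1; 3; 4; 5; 6; 10; 11; 12]; [:: 7; 2; 8; 9; 0; 1; 3; 4; 6; 5; 10; 11; 12]; [:: 0; 1; 2; 3; 4; 6; 5; 10; 11; 12; 7; 8; 9]; [:: 0; 1; 3; 2; 4; 6; 5; 10; 11; 12; 7; 8; 9]; [:: 7; 2; 8; 9; 0; 3; 1; 4; 5; 6; 10; 11; 12]; [:: 7; 2; 8; 9; 0; 3; 1; 4; 6; 5; 10; 11; 12]; [:: 0; 2; 1; 3; 4; 5; 6; 7; 8; 9; 10; 11; 12]; [:: 0; 2; 1; 3; 4; 6; 5; 7; 8; 9; 10; 11; 12]; [:: 0;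 1; 2; 3; 7; 8; 9; 4; 5; 6; 10; 11; 12]; [:: 0; 1; 2; 3; 7; 8; 9; 4; 6; 5; 10; 11; 12]; [:: 0; 3; 1; 2; 4; 5; 6; 7; 8; 9; 10; 11; 12]; [:: 0; 3; 1; 2; 4; 6; 5; 7; 8; 9; 10; 11; 12]; [:: 0; 3; 2; 1; 7; 8; 9; 4; 5; 6; 10; 11; 12]; [:: 0; 3; 2; 1; 7; 8; 9; 4; 6; 5; 10; 11; 12]; [:: 0; 2; 1; 3; 4; 5; 6; 10; 11; 12; 7; 8; 9]; [:: 0; 3; 1; 2; 4; 5; 6; 10; 11; 12; 7; 8; 9]; [:: 7; 8; 2; 9; 0; 1; 3; 4; 5; 6; 10; 11; 12]; [:: 7; 8; 2; 9; 0; 1; 3; 4; 6; 5; 10; 11; 12]; [:: 0; 2; 1; 3; 4; 6; 5; 10; 11; 12; 7; 8; 9]; [:: 0; 3; 1; 2; 4; 6; 5; 10; 11; 12; 7; 8; 9]; [:: 7; 8; 2; 9; 0; 3; 1; 4; 5; 6; 10; 11; 12]; [:: 7; 8; 2; 9; 0; 3; 1; 4; 6; 5; 10; 11; 12]; [:: 0; 2; 3; 1; 4; 5; 6; 7; 8; 9; 10; 11; 12]; [:: 0; 2; 3; 1; 4; 6; 5; 7; 8; 9; 10; 11; 12]; [:: 0; 1; 3; 2; 7; 8; 9; 4; 5; 6; 10; 11; 12]; [:: 0; 1; 3; 2; 7; 8; 9; 4; 6; 5; 10; 11; 12]; [:: 0; 3; 2; 1; 4; 5; 6; 7; 8; 9;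 10; 11; 12]; [:: 0; 3; 2; 1; 4; 6; 5; 7; 8; 9; 10; 11; 12]; [:: 0; 3; 1; 2; 7; 8; 9; 4; 5; 6; 10; 11; 12]; [:: 0; 3; 1; 2; 7; 8; 9; 4; 6; 5; 10; 11; 12]; [:: 0; 2; 3; 1; 4; 5; 6; 10; 11; 12; 7; 8; 9]; [:: 0; 3; 2; 1; 4; 5; 6; 10; 11; 12; 7; 8; 9]; [:: 7; 8; 9; 2; 0; 1; 3; 4; 5; 6; 10; 11; 12]; [:: 7; 8; 9; 2; 0; 1; 3; 4; 6; 5; 10; 11; 12]; [:: 0; 2; 3; 1; 4; 6; 5; 10; 11; 12; 7; 8; 9]; [:: 0; 3; 2; 1; 4; 6; 5; 10; 11; 12; 7; 8; 9]; [:: 7; 8; 9; 2; 0; 3; 1; 4; 5; 6; 10; 11; 12]; [:: 7; 8; 9; 2; 0; 3; 1; 4; 6; 5; 10; 11; 12]].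
Definition tbl a b c := nth [::] tbls (index (a, b, c) keys).

Definition allv :=
  all (fun a => all (fun b => all (fun c =>
    (degb (G3rel a b c) && diamc (G3rel a b c)) ==> isob (G3rel a b c) (G3rel 1 2 5) (tbl a b c))
    (iota 0 10)) (iota 0 7)) (iota 0 4).

Lemma allvT : allv.
Proof. vm_compute. reflexivity. Qed.

Lemma canon a b c : a < 4 -> b < 7 -> c < 10 ->
  max_degree_le (G3 a b c) 3 -> diameter_is (G3 a b c) 8 ->
  isomorphic (G3 a b c) (G3 1 2 5).
Proof.
move=> Ha Hb Hc /degbP Hd /diambP; rewrite -diamcE => Hm.
have := allvT; rewrite /allv => /allP /(_ a); rewrite mem_iota Ha => /(_ isT).
move=> /allP /(_ b); rewrite mem_iota Hb => /(_ isT).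
move=> /allP /(_ c); rewrite mem_iota Hc => /(_ isT).
rewrite Hd Hm /=; exact: (isobP (E1 := G3rel a b c) (E2 := G3rel 1 2 5)).
Qed.

Theorem mainTheorem14 (v0 v1 v2 w0 w1 w2 : nat) :
  v0 < 4 -> v1 < 7 -> v2 < 10 ->
  w0 < 4 -> w1 < 7 -> w2 < 10 ->
  max_degree_le (G3 v0 v1 v2) 3 -> diameter_is (G3 v0 v1 v2) 8 ->
  max_degree_le (G3 w0 w1 w2) 3 -> diameter_is (G3 w0 w1 w2) 8 ->
  isomorphic (G3 v0 v1 v2) (G3 w0 w1 w2).
Proof.
move=> H1 H2 H3 H4 H5 H6 H7 H8 H9 H10.
apply: (iso_trans (canon H1 H2 H3 H7 H8)).
exact: iso_sym (canon H4 H5 H6 H9 H10).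
Qed.
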